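(* Let $G$ be a connected finite simple graph with edge weight function $w$ and vertex weight function $w_1$, let $u$ be a vertex of $G$ and let $T=T(G,u)$ be the weighted path-tree of $G$ with respect to $u$. Then $\eta_{(w,w_1)}(G,x)$ divides $\eta_{(w,w_1)}(T,x)$.
   Context: An edge weight function $w$ assigns a nonzero complex number to each edge; a vertex weight function $w_1$ assigns a real number (possibly $0$) to each vertex; induced subgraphs carry restricted weights. For $A\subseteq E(G)$, $w(A)=\prod_{e\in A}w(e)$. $\mu_w(G,x)=\sum_{M}(-1)^{|M|}|w(M)|^2x^{n-2|M|}$ over all matchings $M$ (including empty). $\eta_{(w,w_1)}(G,x)=\sum_{S\subseteq V(G)}(-1)^{|V(G)\setminus S|}\big(\prod_{v\in V(G)\setminus S}w_1(v)\big)\mu_w(G[S],x)$ with $G[S]$ the induced subgraph; $\mu_w$ of the empty graph is $1$. The path-tree $T(G,u)$ has as vertices the paths in $G$ starting at $u$ (including the trivial path $u$); two such paths are adjacent iff one is obtained from the other by appending one vertex $y$ adjacent in $G$ to the last vertex $z$ of the shorter path; this edge gets weight $w(e_{zy})$. The trivial path $u$ gets vertex weight $w_1(u)$; a path of length at least $1$ gets weight $w_1$ of its endpoint other than $u$. *)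

(* Defs.v *)
From HB Require Import structures.
From mathcomp Require Import all_boot all_order all_algebra.
Set Implicit Arguments. Unset Strict Implicit. Unset Printing Implicit Defensive.
Import Order.TTheory GRing.Theory Num.Theory.
Local Open Scope ring_scope.

Section WeightedGraphs.
Variable C : numClosedFieldType.

(* A finite simple graph: vertex type T (finType), adjacency relation adj
   (assumed symmetric and irreflexive in the theorem).
   Edge weights are given by a (symmetric) function w : T -> T -> C, the
   weight of the edge {x,y} being w x y. *)

(* A matching of the induced subgraph G[S]: a set of edges, each edge {x,y}
   represented once, as the ordered pair (x,y) with rank x < rank y;
   edges lie in S and are pairwise vertex-disjoint. *)
Definition is_matching (T : finType) (adj : rel T) (S : {set T})
    (M : {set T * T}) : bool :=
  [forall p in M, [&& adj p.1 p.2, p.1 \in S, p.2 \in S &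
                      (enum_rank p.1 < enum_rank p.2)%N]] &&
  [forall p in M, forall q in M, (p != q) ==>
      [&& p.1 != q.1, p.1 != q.2, p.2 != q.1 & p.2 != q.2]].

Definition mu_w (T : finType) (adj : rel T) (w : T -> T -> C) (S : {set T})
    : {poly C} :=
  \sum_(M : {set T * T} | is_matching adj S M)
     ((-1) ^+ #|M| * \prod_(p in M) `|w p.1 p.2| ^+ 2) *:
       'X^(#|S| - (#|M|).*2).

Definition eta_poly (T : finType) (adj : rel T) (w : T -> T -> C) (w1 : T -> C)
    : {poly C} :=
  \sum_(S : {set T})
     ((-1) ^+ #|~: S| * \prod_(v in ~: S) w1 v) *: mu_w adj w S.

(* Path tree.  A path of G starting at u is u :: t with u :: t duplicate-free
   and consecutive vertices adjacent; we represent it by its tail t. *)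
Definition is_ptail (T : finType) (adj : rel T) (u : T) (t : seq T) : bool :=
  uniq (u :: t) && path adj u t.

(* list of all tails of paths starting at u (a path has at most #|T| vertices) *)
Definition ptails (T : finType) (adj : rel T) (u : T) : seq (seq T) :=
  flatten [seq map val (enum [pred s : k.-tuple T | is_ptail adj u (val s)])
          | k <- iota 0 #|T|].

Definition PT (T : finType) (adj : rel T) (u : T) : finType :=
  seq_sub (ptails adj u).

Definition pt_ext (T : finType) (adj : rel T) (u : T) (p q : PT adj u) : bool :=
  [exists y : T, ssval q == rcons (ssval p) y].

Definition pt_adj (T : finType) (adj : rel T) (u : T) : rel (PT adj u) :=
  fun p q => pt_ext p q || pt_ext q p.

Definition pt_end (T : finType) (adj : rel T) (u : T) (p : PT adj u) : T :=
  last u (ssval p).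

Definition pt_w (T : finType) (adj : rel T) (w : T -> T -> C) (u : T)
    (p q : PT adj u) : C :=
  if pt_ext p q then w (pt_end p) (pt_end q)
  else if pt_ext q p then w (pt_end q) (pt_end p) else 1.

Definition pt_w1 (T : finType) (adj : rel T) (w1 : T -> C) (u : T)
    (p : PT adj u) : C :=
  w1 (pt_end p).

End WeightedGraphs.

(* Main.v *)
Require Import Defs.
From HB Require Import structures.
From mathcomp Require Import all_boot all_order all_algebra.
From mathcomp Require Import ring.
Set Implicit Arguments. Unset Strict Implicit. Unset Printing Implicit Defensive.

Section Tree.
Variable T : finType.
Variable adj : rel T.
Variable u : T.
Local Notation PT := (PT adj u).

Lemma mem_ptails t : (t \in ptails adj u) = is_ptail adj u t.
Proof.
apply/flattenP/idP => [[s /mapP[k _ ->] /mapP[x]]|h].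
  by rewrite mem_enum => h ->.
have hs : (size t < #|T|)%N.
  case/andP: h => un _; have := max_card (mem (u :: t)).
  by rewrite (card_uniqP un).
exists (map val (enum [pred s : (size t).-tuple T | is_ptail adj u (val s)])).
  by apply/mapP; exists (size t) => //; rewrite mem_iota.
by apply/mapP; exists (in_tuple t) => //; rewrite mem_enum.
Qed.

Definition mkPT t (h : is_ptail adj u t) : PT.
Proof. by exists t; rewrite mem_ptails. Defined.

Lemma mkPTE t h : ssval (@mkPT t h) = t. Proof. by []. Qed.

Lemma ptP (q : PT) : is_ptail adj u (ssval q).
Proof. by rewrite -mem_ptails; exact: ssvalP. Qed.

Lemma pt_inj (p q : PT) : ssval p = ssval q -> p = q.
Proof. by move=> e; apply: val_inj. Qed.

Lemma ptail_cat s1 s2 : is_ptail adj u (s1 ++ s2) -> is_ptail adj u s1.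
Proof.
rewrite /is_ptail => /andP[h1 h2]; move: h1 h2.
by rewrite -cat_cons cat_uniq cat_path => /andP[-> _] /andP[-> _].
Qed.

Lemma ptail_rcons t y : is_ptail adj u (rcons t y) =
   [&& is_ptail adj u t, y \notin u :: t & adj (last u t) y].
Proof.
rewrite /is_ptail -rcons_cons rcons_uniq rcons_path.
by case: (uniq _); case: (y \in _); case: (path _ _ _); case: (adj _ _).
Qed.

Definition Subt (p : PT) := [set q : PT | prefix (ssval p) (ssval q)].
Definition Ch (p : PT) := [set q : PT | pt_ext p q].

Lemma pt_extP (p q : PT) : reflect (exists y, ssval q = rcons (ssval p) y) (pt_ext p q).
Proof. by apply: (iffP existsP) => [[y /eqP]|[y e]]; exists y => //; apply/eqP. Qed.

Lemma ext_prefix (p q : PT) : pt_ext p q -> prefix (ssval p) (ssval q).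
Proof. by case/pt_extP=> y ->; apply: prefix_rcons. Qed.

Lemma ext_size (p q : PT) : pt_ext p q -> size (ssval q) = (size (ssval p)).+1.
Proof. by case/pt_extP=> y ->; rewrite size_rcons. Qed.

Lemma Sub_refl (p : PT) : p \in Subt p.
Proof. by rewrite inE prefix_refl. Qed.

Lemma Sub_adj (p q : PT) : q \in Subt p -> pt_adj p q = pt_ext p q.
Proof.
rewrite inE /pt_adj => /size_prefix h; case: (boolP (pt_ext q p)) => H; last by rewrite orbF.
by have e := ext_size H; move: h; rewrite e ltnn.
Qed.

Lemma pt_adj_sym : symmetric (@pt_adj _ adj u).
Proof. by move=> p q; rewrite /pt_adj orbC. Qed.

Lemma pt_ext_irr (p : PT) : pt_ext p p = false.
Proof. by apply/negbTE/negP=> H; move: (ext_size H) => /eqP; rewrite eqn_leq ltnn andbF. Qed.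

Lemma pt_adj_irr : irreflexive (@pt_adj _ adj u).
Proof. by move=> p; rewrite /pt_adj pt_ext_irr. Qed.

Lemma ext_asym (p q : PT) : pt_ext p q -> pt_ext q p = false.
Proof.
move=> H0; have e := ext_size H0; apply/negbTE/negP=> H; move: (ext_size H); rewrite e => /eqP.
by elim: (size (ssval p)) => // n IH; rewrite eqSS.
Qed.

Lemma Ch_sub (p q : PT) : q \in Ch p -> q \in Subt p.
Proof. by rewrite !inE; apply: ext_prefix. Qed.

Lemma Sub_Ch_nth (p i r : PT) : i \in Ch p -> r \in Subt i ->
  nth u (ssval r) (size (ssval p)) = pt_end i.
Proof.
rewrite !inE => /pt_extP[y ei] /prefixP[s er].
by rewrite er /pt_end ei last_rcons nth_cat size_rcons ltnSn nth_rcons ltnn eqxx.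
Qed.

Lemma Ch_end_inj (p : PT) : {in Ch p &, injective (@pt_end _ adj u)}.
Proof.
move=> i j; rewrite !inE => /pt_extP[y ei] /pt_extP[z ej].
by rewrite /pt_end ei ej !last_rcons => yz; apply: pt_inj; rewrite ei ej yz.
Qed.

Lemma Ch_sep (p i j r r' : PT) : i \in Ch p -> j \in Ch p -> i != j ->
  r \in Subt i -> r' \in Subt j -> (r != r') && ~~ pt_adj r r'.
Proof.
move=> iC jC ij ri rj'.
have ne : pt_end i != pt_end j by apply: contra ij => /eqP /(Ch_end_inj iC jC) ->.
have ni := Sub_Ch_nth iC ri; have nj := Sub_Ch_nth jC rj'.
apply/andP; split.
  by apply: contra ne => /eqP err; rewrite -ni -nj err.
rewrite /pt_adj negb_or; apply/andP; split; apply/negP => /ext_prefix pr.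
  have ri' : r' \in Subt i by rewrite !inE in ri *; apply: prefix_trans pr.
  by move: ne; rewrite -(Sub_Ch_nth iC ri') nj eqxx.
have rj : r \in Subt j by rewrite !inE in rj' *; apply: prefix_trans pr.
by move: ne; rewrite -ni (Sub_Ch_nth jC rj) eqxx.
Qed.

Lemma Sub_split (p : PT) : Subt p :\ p = \bigcup_(q in Ch p) Subt q.
Proof.
apply/setP=> r; apply/setD1P/bigcupP => [[rp]|[q qC rq]].
  rewrite inE => /prefixP[s er]; case: s er => [|y s] er.
    by case/eqP: rp; apply: pt_inj; rewrite er cats0.
  have h : is_ptail adj u (rcons (ssval p) y).
    by apply: (@ptail_cat _ s); rewrite cat_rcons -er; apply: ptP.
  exists (mkPT h); first by rewrite inE; apply/pt_extP; exists y.
  by rewrite inE mkPTE er -cat_rcons prefix_prefix.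
have qC' : pt_ext p q by rewrite inE in qC.
rewrite inE in rq; have := Ch_sub qC; rewrite !inE => pq; split.
  apply/eqP=> e; move: (ext_size qC') (size_prefix rq); rewrite e => ->.
  by rewrite ltnn.
by apply: prefix_trans rq.
Qed.

Lemma Ch_notin (p i : PT) : i \in Ch p -> p \notin Subt i.
Proof.
rewrite inE => H; have e := ext_size H; rewrite inE; apply/negP => /size_prefix.
by rewrite e ltnn.
Qed.

Lemma Ch_end (p q : PT) : q \in Ch p ->
  [/\ ssval q = rcons (ssval p) (pt_end q), pt_end q \notin u :: ssval p &
      adj (pt_end p) (pt_end q)].
Proof.
rewrite inE => /pt_extP[y e]; have := ptP q; rewrite e ptail_rcons => /and3P[_ h1 h2].
by rewrite /pt_end e last_rcons.
Qed.

Lemma Ch_exists (p : PT) y : y \notin u :: ssval p -> adj (pt_end p) y ->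
  exists2 q, q \in Ch p & pt_end q = y.
Proof.
move=> h1 h2; have h : is_ptail adj u (rcons (ssval p) y) by rewrite ptail_rcons ptP h1.
exists (mkPT h); first by rewrite inE; apply/pt_extP; exists y.
by rewrite /pt_end mkPTE last_rcons.
Qed.

Definition ptroot : PT := @mkPT [::] isT.

Lemma Sub_root : Subt ptroot = setT.
Proof. by apply/setP=> q; rewrite !inE prefix0s. Qed.

End Tree.

Section Paths.
Variable T : finType.
Variable adj : rel T.
Hypothesis adj_sym : symmetric adj.

Definition eA (A : {set T}) : rel T := fun x y => [&& adj x y, x \in A & y \in A].

Lemma path_closed (e e' : rel T) (P : pred T) x s :
  (forall a b, P a -> e a b -> P b && e' a b) -> P x -> path e x s -> path e' x s.
Proof.
move=> H; elim: s x => //= y s IH x Px /andP[exy ps].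
have /andP[Py e'xy] := H x y Px exy; by rewrite e'xy (IH y).
Qed.

Lemma connect_closed (e e' : rel T) (P : pred T) x z :
  (forall a b, P a -> e a b -> P b && e' a b) -> P x -> connect e x z -> connect e' x z.
Proof.
move=> H Px /connectP[s ps ->]; apply/connectP; exists s => //.
exact: path_closed H Px ps.
Qed.

Lemma L1 (B : {set T}) x z : connect (eA B) x z -> x = z \/ x \in B.
Proof.
case/connectP=> [[|y s]] /=; first by move=> _ ->; left.
by case/andP=> /and3P[_ xB _] _ _; right.
Qed.

Definition compo (B : {set T}) y0 := [set z in B | connect (eA B) y0 z].

Lemma comp_sub (B : {set T}) y0 : compo B y0 \subset B.
Proof. by apply/subsetP=> z; rewrite inE => /andP[]. Qed.

Lemma comp_closed (B : {set T}) y0 a b : a \in compo B y0 -> adj a b -> b \in B -> b \in compo B y0.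
Proof.
rewrite !inE => /andP[aB ca] ab bB; rewrite bB /=.
by apply: connect_trans ca (connect1 _); rewrite /eA /= ab aB bB.
Qed.

Lemma L2 (B : {set T}) y0 z : y0 \in B -> z \in compo B y0 -> connect (eA (compo B y0)) y0 z.
Proof.
move=> y0B zK; have := zK; rewrite inE => /andP[_ c].
apply: (connect_closed (P := [pred a | a \in compo B y0])) c; last by rewrite /= inE y0B connect0.
move=> a b /= aK /and3P[ab aB bB]; have bK := comp_closed aK ab bB.
by rewrite bK /eA /= ab aK bK.
Qed.

Lemma L3 (B : {set T}) y0 y z : z \in B -> z \notin compo B y0 -> connect (eA B) y z ->
  connect (eA (B :\: compo B y0)) y z.
Proof.
move=> zB zK c; have yK : y \notin compo B y0.
  apply: contra zK; rewrite !inE zB => /andP[_ c0]; exact: connect_trans c0 c.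
apply: (connect_closed (P := [pred a | a \notin compo B y0])) c => //.
move=> a b /= aK /and3P[ab aB bB]; have bK : b \notin compo B y0.
  apply: contra aK => bK; apply: comp_closed bK _ aB; by rewrite adj_sym.
by rewrite bK /eA /= ab !in_setD aK aB bK bB.
Qed.

Lemma L4 (A : {set T}) v z : connect (eA A) v z -> z != v ->
  exists y, [/\ adj v y, y \in A :\ v & connect (eA (A :\ v)) y z].
Proof.
case/connectP=> s ps ->; case: (shortenP ps) => s' ps' uq _.
case: s' ps' uq => [|y s'] /=; first by rewrite eqxx.
case/andP=> /and3P[vy vA yA] ps' /andP[vn _].
exists y; split => //.
  by rewrite !inE yA andbT; apply: contraNneq vn => ->; rewrite mem_head.
apply/connectP; exists s' => //.
apply: (sub_in_path (P := [pred a | a != v]) (e := eA A)).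
- move=> a b; rewrite !inE /eA /= => av bv /and3P[ab aA bA]; by rewrite ab !in_setD1 av aA bv bA.
- apply/allP=> a ain /=; apply: contraNneq vn => e; by rewrite -e.
- exact: ps'.
Qed.
End Paths.

Import Order.TTheory GRing.Theory Num.Theory.
Local Open Scope ring_scope.

Section Match.
Variable C : numClosedFieldType.
Variable T : finType.
Variable adj : rel T.
Variable w : T -> T -> C.
Hypothesis adj_sym : symmetric adj.
Hypothesis adj_irr : irreflexive adj.
Hypothesis wn_sym : forall x y, `|w x y| = `|w y x|.

Definition ed (a b : T) : T * T :=
  if (enum_rank a < enum_rank b)%N then (a, b) else (b, a).

Lemma ed_inj a : injective (ed a).
Proof.
move=> b b'; rewrite /ed.
by do 2 case: ifP => _; case=> *; subst.
Qed.

Lemma matchP (S : {set T}) (M : {set T * T}) : reflect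
  ((forall p, p \in M -> [/\ adj p.1 p.2, p.1 \in S, p.2 \in S & (enum_rank p.1 < enum_rank p.2)%N]) /\
   (forall p q, p \in M -> q \in M -> p != q ->
       [/\ p.1 != q.1, p.1 != q.2, p.2 != q.1 & p.2 != q.2]))
  (is_matching adj S M).
Proof.
apply: (iffP andP) => [[/forallP H1 /forallP H2]|[H1 H2]]; split.
- by move=> p pM; move/implyP: (H1 p) => /(_ pM) /and4P[].
- move=> p q pM qM pq; move/implyP: (H2 p) => /(_ pM) /forallP /(_ q) /implyP /(_ qM).
  by move/implyP/(_ pq)/and4P.
- by apply/forallP=> p; apply/implyP=> /H1 [-> -> -> ->].
- apply/forallP=> p; apply/implyP=> pM; apply/forallP=> q; apply/implyP=> qM.
  by apply/implyP=> pq; have [-> -> -> ->] := H2 p q pM qM pq.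
Qed.

Lemma match_card (S : {set T}) (M : {set T * T}) : is_matching adj S M -> (#|M|.*2 <= #|S|)%N.
Proof.
case/matchP=> H1 H2.
have inj1 : {in M &, injective (fun p : T * T => p.1)}.
  move=> p q pM qM e; apply/eqP; apply: contraT => pq.
  by have [/eqP] := H2 p q pM qM pq.
have inj2 : {in M &, injective (fun p : T * T => p.2)}.
  move=> p q pM qM e; apply/eqP; apply: contraT => pq.
  by have [_ _ _ /eqP] := H2 p q pM qM pq.
have dis : [disjoint [set p.1 | p in M] & [set p.2 | p in M]].
  rewrite -setI_eq0; apply/eqP/setP=> x; rewrite !inE.
  apply/andP=> -[/imsetP[p pM ->] /imsetP[q qM e]].
  have [pq|npq] := eqVneq p q.
    by subst; have [_ _ _ ] := H1 q qM; rewrite e ltnn.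
  by have [_ /eqP] := H2 p q pM qM npq.
have := subset_leq_card (_ : [set p.1 | p in M] :|: [set p.2 | p in M] \subset S).
rewrite cardsU (disjoint_setI0 dis) cards0 subn0 !card_in_imset // -addnn.
apply; apply/subsetP=> x; rewrite inE => /orP[] /imsetP[p pM ->];
  by have [] := H1 p pM.
Qed.

Definition cov a (M : {set T * T}) := [exists b, ed a b \in M].

Lemma match_sub (S S' : {set T}) M : S \subset S' -> is_matching adj S M -> is_matching adj S' M.
Proof.
move=> sS /matchP[H1 H2]; apply/matchP; split=> // p /H1[? h1 h2 ?].
by split=> //; apply: (subsetP sS).
Qed.

Lemma ed_of (S : {set T}) M p : is_matching adj S M -> p \in M -> ed p.1 p.2 = p /\ ed p.2 p.1 = p.
Proof.
case/matchP=> H1 _ /H1[_ _ _ r]; rewrite /ed r; case: ltngtP r => //.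
by case: p.
Qed.

Lemma E1 a (S : {set T}) M : a \in S ->
  (is_matching adj S M && ~~ cov a M) = is_matching adj (S :\ a) M.
Proof.
move=> aS; apply/idP/idP.
- case/andP=> m ncov; have [H1 H2] := matchP _ _ m.
  apply/matchP; split=> // p pM; have [h1 h2 h3 h4] := H1 p pM.
  have [e1 e2] := ed_of m pM.
  split=> //; rewrite !inE ?h2 ?h3 andbT; apply: contraNneq ncov => ea;
    apply/existsP; [exists p.2 | exists p.1]; by rewrite -ea ?e1 ?e2.
- move=> m; rewrite (match_sub (subsetDl _ _) m) /=.
  apply/negP=> /existsP[b]; rewrite /ed; case: ifP => _ eM;
  have [H1 _] := matchP _ _ m; have [_] := H1 _ eM; rewrite /= !inE eqxx //;
  by rewrite andbF.
Qed.

Lemma ed_uniq a b b' (S : {set T}) M : is_matching adj S M ->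
  ed a b \in M -> ed a b' \in M -> b = b'.
Proof.
case/matchP=> _ H2 h h'; apply: (@ed_inj a); apply/eqP; apply: contraT => ne.
have [] := H2 _ _ h h' ne; move: h h' ne.
by rewrite /ed; do 2 case: ifP => _ /=; rewrite ?eqxx.
Qed.

Lemma E2 a b (S : {set T}) M : a \in S -> b \in S -> adj a b ->
  (is_matching adj S (ed a b |: M) && (ed a b \notin M)) = is_matching adj (S :\ a :\ b) M.
Proof.
move=> aS bS ab; have nab : a != b by apply: contraTneq ab => ->; rewrite adj_irr.
have rab : enum_rank a != enum_rank b by rewrite (inj_eq enum_rank_inj).
apply/idP/idP.
- case/andP=> /matchP[H1 H2] neM; apply/matchP; split.
  + move=> p pM; have pM' : p \in ed a b |: M by rewrite inE pM orbT.
    have [h1 h2 h3 h4] := H1 p pM'.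
    have pe : p != ed a b by apply: contraNneq neM => <-.
    have [] := H2 p _ pM' (setU11 _ _) pe.
    rewrite /ed; case: ifP => _ /= d1 d2 d3 d4; split=> //; rewrite !inE ?h2 ?h3 andbT;
    by rewrite ?d1 ?d2 ?d3 ?d4 // eq_sym ?d1 ?d2 ?d3 ?d4.
  + move=> p q pM qM; apply: H2; by rewrite inE ?pM ?qM orbT.
- move=> m; have [H1 H2] := matchP _ _ m; apply/andP; split; last first.
    apply/negP=> /H1 []; rewrite /ed; case: ifP => _ /= _; rewrite !inE eqxx //.
    by rewrite andbF.
  apply/matchP; split.
  + move=> p; rewrite !inE => /orP[/eqP ->|pM]; last first.
      have sS : S :\ a :\ b \subset S by apply: subset_trans (subsetDl _ _) (subsetDl _ _).
      by have [? h2 h3 ?] := H1 p pM; split=> //; apply: (subsetP sS).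
    rewrite /ed; case: ifP => r /=; split=> //; rewrite 1?adj_sym // ?ltnNge ?r //=.
    by rewrite leq_eqVlt r orbF.
  + move=> p q; rewrite !inE => /orP[/eqP ->|pM] /orP[/eqP ->|qM]; rewrite ?eqxx // => pq.
    * have [_ h2 h3 _] := H1 q qM; move: h2 h3; rewrite !inE.
      case/and3P=> q1b q1a _ /and3P[q2b q2a _].
      by rewrite /ed; case: ifP => _ /=; rewrite !(eq_sym _ q.1) !(eq_sym _ q.2) ?q1a ?q1b ?q2a ?q2b.
    * have [_ h2 h3 _] := H1 p pM; move: h2 h3; rewrite !inE.
      case/and3P=> q1b q1a _ /and3P[q2b q2a _].
      by rewrite /ed; case: ifP => _ /=; rewrite ?q1a ?q1b ?q2a ?q2b.
    * exact: H2.
Qed.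

Definition Fm (S : {set T}) (M : {set T * T}) : {poly C} :=
  ((-1) ^+ #|M| * \prod_(p in M) `|w p.1 p.2| ^+ 2) *: 'X^(#|S| - (#|M|).*2).

Lemma ed_in a b (S : {set T}) M : is_matching adj S M -> ed a b \in M ->
  [/\ b \in S, a \in S & adj a b].
Proof.
case/matchP=> H1 _ /H1; rewrite /ed; case: ifP => _ /= [h1 h2 h3 _]; split=> //.
by rewrite adj_sym.
Qed.

Lemma stepA a (S : {set T}) :
  \sum_(M | is_matching adj S M && cov a M) Fm S M =
  \sum_(b in S | adj a b) \sum_(M | is_matching adj S M && (ed a b \in M)) Fm S M.
Proof.
rewrite big_mkcond /=.
under [RHS]eq_bigr do rewrite big_mkcond /=.
rewrite exchange_big /=; apply: eq_bigr => M _.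
case m: (is_matching adj S M) => /=; last by rewrite big1.
case: ifPn => [/existsP[b0 h0]|nc]; last first.
  rewrite big1 // => b _; case: ifP => // h; case/negP: nc; apply/existsP; by exists b.
have [b0S _ ab0] := ed_in m h0.
rewrite (bigD1 b0) /=; last by rewrite b0S ab0.
rewrite h0 big1 ?addr0 // => b /andP[_ nb]; case: ifP => // h.
by case/eqP: nb; apply: (ed_uniq m h h0).
Qed.

Lemma setU1D1 (U : finType) (e : U) (M : {set U}) : ((e |: M) :\ e == M) = (e \notin M).
Proof.
case: (boolP (e \in M)) => h; last by rewrite setU1K ?eqxx.
by apply/eqP => E; move: h; rewrite -E setD11.
Qed.

Lemma stepB a b (S : {set T}) : a \in S -> b \in S -> adj a b ->
  \sum_(M | is_matching adj S M && (ed a b \in M)) Fm S M =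
  - (`|w a b| ^+ 2 *: mu_w adj w (S :\ a :\ b)).
Proof.
move=> aS bS ab; have nab : a != b by apply: contraTneq ab => ->; rewrite adj_irr.
rewrite (reindex_onto (fun M' => ed a b |: M') (fun M => M :\ ed a b)) /=; last first.
  by move=> M /andP[_ h]; rewrite setD1K.
rewrite (eq_bigl (fun M => is_matching adj (S :\ a :\ b) M)); last first.
  by move=> M; rewrite setU11 andbT setU1D1 E2.
rewrite /mu_w scaler_sumr -sumrN; apply: eq_bigr => M m.
have ne : ed a b \notin M.
  by have := m; rewrite -(E2 _ aS bS ab) => /andP[].
rewrite /Fm cardsU1 ne big_setU1 //= scalerA -scaleNr; congr (_ *: 'X^_).
  have -> : `|w (ed a b).1 (ed a b).2| = `|w a b| by rewrite /ed; case: ifP => //= _; rewrite wn_sym.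
  by rewrite add1n exprS; ring.
rewrite (cardsD1 a S) aS (cardsD1 b (S :\ a)) !inE eq_sym nab bS /=.
by rewrite add1n doubleS subSS.
Qed.

Lemma mu_rec a (S : {set T}) : a \in S ->
  mu_w adj w S = 'X * mu_w adj w (S :\ a)
     - \sum_(b in S | adj a b) (`|w a b| ^+ 2) *: mu_w adj w (S :\ a :\ b).
Proof.
move=> aS; rewrite {1}/mu_w -/(Fm S) (bigID (cov a)) /= addrC; congr (_ + _).
  rewrite (eq_bigl (fun M => is_matching adj (S :\ a) M)); last by move=> M; rewrite E1.
  rewrite /mu_w mulr_sumr; apply: eq_bigr => M m.
  rewrite /Fm (cardsD1 a S) aS subSn ?match_card // exprS.
  by rewrite scalerAr.
rewrite stepA -sumrN; apply: eq_bigr => b /andP[bS ab]; exact: stepB.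
Qed.

Lemma mu0 : mu_w adj w set0 = 1.
Proof.
rewrite /mu_w (big_pred1 set0) ?cards0 ?big_set0 ?expr0 ?mul1r ?scale1r //.
move=> M; apply/idP/eqP => [/matchP[H1 _]|->].
  by apply/setP=> p; rewrite inE; apply/negP=> /H1[_]; rewrite inE.
by apply/matchP; split=> p; rewrite inE.
Qed.
End Match.

Lemma split_sub (U : finType) (V : nmodType) (F : {set U} -> V) x (A : {set U}) : x \in A ->
  \sum_(S : {set U} | S \subset A) F S = \sum_(S : {set U} | S \subset A :\ x) F S + \sum_(S : {set U} | S \subset A :\ x) F (x |: S).
Proof.
move=> xA; rewrite (bigID (fun S : {set U} => x \in S)) /= addrC; congr (_ + _).
  by apply: eq_bigl => S; rewrite subsetD1.
rewrite (reindex_onto (fun S => x |: S) (fun S => S :\ x)) /=; last first.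
  by move=> S /andP[_ h]; rewrite setD1K.
apply: eq_bigl => S; rewrite setU11 andbT setU1D1 subUset sub1set xA /=.
by rewrite subsetD1.
Qed.

Section Eta.
Variable C : numClosedFieldType.
Variable T : finType.
Variable adj : rel T.
Variable w : T -> T -> C.
Variable w1 : T -> C.
Hypothesis adj_sym : symmetric adj.
Hypothesis adj_irr : irreflexive adj.
Hypothesis wn_sym : forall x y, `|w x y| = `|w y x|.

Definition cf (A S : {set T}) : C := (-1) ^+ #|A :\: S| * \prod_(v in A :\: S) w1 v.
Definition etaS (A : {set T}) : {poly C} :=
  \sum_(S : {set T} | S \subset A) cf A S *: mu_w adj w S.

Lemma etaS_T : etaS setT = eta_poly adj w w1.
Proof.
rewrite /etaS /eta_poly; apply: eq_big => [S|S _]; first by rewrite subsetT.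
by rewrite /cf setTD.
Qed.

Lemma cf1 (x : T) (A S : {set T}) : x \in A -> S \subset A :\ x -> cf A S = - w1 x * cf (A :\ x) S.
Proof.
move=> xA; rewrite subsetD1 => /andP[_ xS].
have E : A :\: S = x |: ((A :\ x) :\: S).
  apply/setP=> y; rewrite !inE; case: (eqVneq y x) => [->|] //=.
  by rewrite xS xA.
have nx : x \notin (A :\ x) :\: S by rewrite !inE eqxx andbF.
rewrite /cf E cardsU1 nx big_setU1 //= add1n exprS; ring.
Qed.

Lemma cf2 (x : T) (A S : {set T}) : cf A (x |: S) = cf (A :\ x) S.
Proof.
rewrite /cf; have -> : A :\: (x |: S) = (A :\ x) :\: S.
  apply/setP=> y; rewrite !inE negb_or.
  by case: (y == x); case: (y \in S); case: (y \in A).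
by [].
Qed.

Lemma etaS0 : etaS set0 = 1.
Proof.
rewrite /etaS (big_pred1 set0); last by move=> S; rewrite subset0.
by rewrite mu0 /cf setD0 cards0 big_set0 expr0 mulr1 scale1r.
Qed.

Lemma eta_rec (a : T) (A : {set T}) : a \in A ->
  etaS A = ('X - (w1 a)%:P) * etaS (A :\ a)
     - \sum_(b in A | adj a b) (`|w a b| ^+ 2) *: etaS (A :\ a :\ b).
Proof.
move=> aA; rewrite {1}/etaS (split_sub _ aA).
have P1 : \sum_(S : {set T} | S \subset A :\ a) cf A S *: mu_w adj w S = - (w1 a)%:P * etaS (A :\ a).
  rewrite /etaS mulr_sumr; apply: eq_bigr => S sS.
  by rewrite (cf1 aA sS) -scalerA -polyCN mul_polyC.
have P2 : forall S : {set T}, S \subset A :\ a -> cf A (a |: S) *: mu_w adj w (a |: S) =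
   'X * (cf (A :\ a) S *: mu_w adj w S) -
   cf (A :\ a) S *: \sum_(b in S | adj a b) (`|w a b| ^+ 2) *: mu_w adj w (S :\ b).
  move=> S; rewrite subsetD1 => /andP[_ aS].
  rewrite cf2 (mu_rec adj_sym adj_irr wn_sym (setU11 a S)) setU1K //.
  rewrite scalerBr scalerAr; congr (_ - _ *: _).
  apply: eq_big => [b|b _] //.
  rewrite !inE; case: eqP => //= ->; by rewrite adj_irr andbF.
rewrite (eq_bigr _ (fun S h => P2 S h)) sumrB P1 -mulr_sumr -/(etaS (A :\ a)).
rewrite addrA -mulrDl [- _ + _]addrC; congr (_ - _).
idtac.
under eq_bigr do rewrite scaler_sumr big_mkcond /=.
rewrite exchange_big /= [RHS]big_mkcond /=; apply: eq_bigr => b _.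
case: (boolP (adj a b)) => ab; last first.
  rewrite andbF big1 // => S _; by rewrite andbF.
under eq_bigr do rewrite andbT; rewrite andbT; case: (boolP (b \in A)) => bA; last first.
  rewrite big1 // => S sS; case: ifP => // bS; case/negP: bA.
  by apply: (subsetP (subsetDl A [set a])); apply: (subsetP sS).
have bA' : b \in A :\ a by rewrite !inE bA andbT; apply: contraTneq ab => ->; rewrite adj_irr.
rewrite (split_sub _ bA') big1 ?add0r; last first.
  by move=> S; rewrite subsetD1 => /andP[_ /negbTE ->].
rewrite /etaS scaler_sumr; apply: eq_bigr => S; rewrite subsetD1 => /andP[_ bS].
by rewrite setU11 cf2 setU1K // !scalerA mulrC.
Qed.
End Eta.

Section Eta2.
Variable C : numClosedFieldType.
Variable T : finType.
Variable adj : rel T.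
Variable w : T -> T -> C.
Variable w1 : T -> C.
Hypothesis adj_sym : symmetric adj.
Hypothesis adj_irr : irreflexive adj.
Hypothesis wn_sym : forall x y, `|w x y| = `|w y x|.

Local Notation eta := (etaS adj w w1).
Local Notation rec := (eta_rec w1 adj_sym adj_irr wn_sym).

Lemma etaS_monic (A : {set T}) : eta A \is monic /\ size (eta A) = #|A|.+1.
Proof.
move: {2}#|A|.+1 (leqnn #|A|.+1) => n; elim: n A => [|n IH] A; first by rewrite ltn0.
rewrite ltnS => hA; case: (set_0Vmem A) => [->|[a aA]].
  by rewrite etaS0 cards0 monic1 size_poly1.
have [m1 s1] := IH (A :\ a) (leq_trans (proper_card (properD1 aA)) hA).
have hA1 : #|A| = #|A :\ a|.+1 by rewrite (cardsD1 a A) aA.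
have M1 : ('X - (w1 a)%:P) * eta (A :\ a) \is monic by rewrite monicMl ?monicXsubC.
have S1 : size (('X - (w1 a)%:P) * eta (A :\ a)) = #|A|.+1.
  by rewrite size_monicM ?monicXsubC ?monic_neq0 // size_XsubC s1 hA1.
have S2 : (size (\sum_(b in A | adj a b) (`|w a b| ^+ 2) *: eta (A :\ a :\ b))%R <= #|A :\ a|)%N.
  apply: (big_ind (fun p : {poly C} => size p <= #|A :\ a|)%N) => //.
  - by rewrite size_poly0.
  - move=> p q hp hq; apply: leq_trans (size_polyD _ _) _; by rewrite geq_max hp hq.
  - move=> b /andP[bA ab]; apply: leq_trans (size_scale_leq _ _) _.
    have bA' : b \in A :\ a by rewrite !inE bA andbT; apply: contraTneq ab => ->; rewrite adj_irr.
    have [_ ->] := IH (A :\ a :\ b) (leq_trans (proper_card (properD1 bA')) (ltnW (leq_trans (proper_card (properD1 aA)) hA))).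
    by rewrite (cardsD1 b (A :\ a)) bA'.
have lt : (size (- \sum_(b in A | adj a b) (`|w a b| ^+ 2) *: eta (A :\ a :\ b))%R < size (('X - (w1 a)%:P) * eta (A :\ a))%R)%N.
  by rewrite size_polyN S1 hA1 ltnS ltnW // ltnS.
rewrite (rec aA); split; first by rewrite monicE lead_coefDl // (eqP M1).
by rewrite size_polyDl // S1.
Qed.

Lemma etaS_neq0 A : eta A != 0.
Proof. by have [m _] := etaS_monic A; apply: monic_neq0. Qed.

Lemma etaS_mulU (A B : {set T}) : [disjoint A & B] ->
  (forall x y, x \in A -> y \in B -> ~~ adj x y) -> eta (A :|: B) = eta A * eta B.
Proof.
move: {2}#|A|.+1 (leqnn #|A|.+1) => n; elim: n A => [|n IH] A; first by rewrite ltn0.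
rewrite ltnS => hA dAB nAB; case: (set_0Vmem A) => [->|[a aA]].
  by rewrite set0U etaS0 mul1r.
have aB : a \notin B by rewrite (disjointFr dAB aA).
have aAB : a \in A :|: B by rewrite inE aA.
have E1 : (A :|: B) :\ a = (A :\ a) :|: B.
  apply/setP=> y; rewrite !inE; case: (eqVneq y a) => [->|] //=; by rewrite (negbTE aB).
have dsub : forall A' : {set T}, A' \subset A -> [disjoint A' & B].
  by move=> A' sA; exact: disjointWl sA dAB.
have nsub : forall A' : {set T}, A' \subset A -> forall x y, x \in A' -> y \in B -> ~~ adj x y.
  by move=> A' sA x y xA; apply: nAB; apply: (subsetP sA).
have sA1 : A :\ a \subset A by apply: subsetDl.
have cA1 : (#|A :\ a| < n)%N by apply: leq_trans (proper_card (properD1 aA)) hA.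
rewrite (rec aAB) E1 (IH _ cA1 (dsub _ sA1) (nsub _ sA1)) (rec aA) [RHS]mulrBl -mulrA.
congr (_ - _); rewrite mulr_suml.
rewrite (eq_bigl (fun b => (b \in A) && adj a b)); last first.
  move=> b; rewrite inE; case: (boolP (b \in A)) => //= bA.
  by case: (boolP (b \in B)) => // bB; rewrite (negbTE (nAB _ _ aA bB)).
apply: eq_bigr => b /andP[bA ab].
have bB : b \notin B by rewrite (disjointFr dAB bA).
have -> : (A :\ a :|: B) :\ b = (A :\ a :\ b) :|: B.
  apply/setP=> y; rewrite !inE; case: (eqVneq y b) => [->|] //=; by rewrite (negbTE bB).
have sA2 : A :\ a :\ b \subset A by apply: subset_trans (subsetDl _ _) sA1.
have cA2 : (#|A :\ a :\ b| < n)%N.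
  by apply: leq_trans _ (ltnW cA1); apply: proper_card; apply: properD1;
     rewrite !inE bA andbT; apply: contraTneq ab => ->; rewrite adj_irr.
by rewrite (IH _ cA2 (dsub _ sA2) (nsub _ sA2)) scalerAl.
Qed.

Lemma etaS_big (I : finType) (J : {set I}) (B : I -> {set T}) :
  (forall i j, i \in J -> j \in J -> i != j ->
     [disjoint B i & B j] /\ (forall x y, x \in B i -> y \in B j -> ~~ adj x y)) ->
  eta (\bigcup_(i in J) B i) = \prod_(i in J) eta (B i).
Proof.
move: {2}#|J|.+1 (leqnn #|J|.+1) => n; elim: n J => [|n IH] J; first by rewrite ltn0.
rewrite ltnS => hJ H; case: (set_0Vmem J) => [->|[i iJ]].
  by rewrite !big_set0 etaS0.
rewrite (big_setD1 _ iJ) (big_setD1 _ iJ) /=.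
have cJ : (#|J :\ i| < n)%N by apply: leq_trans (proper_card (properD1 iJ)) hJ.
rewrite etaS_mulU ?IH //.
- move=> k j /setD1P[_ kJ] /setD1P[_ jJ]; exact: H.
- apply: bigcup_disjoint => j /setD1P[ji jJ].
  have ij : i != j by rewrite eq_sym.
  by have [] := H i j iJ jJ ij.
- move=> x y xi /bigcupP[j /setD1P[ji jJ] yj].
  have ij : i != j by rewrite eq_sym.
  by have [_] := H i j iJ jJ ij; apply.
Qed.
End Eta2.

Section Main.
Variable C : numClosedFieldType.
Variable T : finType.
Variable adj : rel T.
Variable w : T -> T -> C.
Variable w1 : T -> C.
Variable u : T.
Hypothesis adj_sym : symmetric adj.
Hypothesis adj_irr : irreflexive adj.
Hypothesis w_sym : forall x y, w x y = w y x.

Local Notation PTT := (PT adj u).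
Local Notation tadj := (@pt_adj T adj u).
Local Notation tw := (@pt_w C T adj w u).
Local Notation tw1 := (@pt_w1 C T adj w1 u).
Local Notation eG := (etaS adj w w1).
Local Notation eT := (etaS tadj tw tw1).

Lemma wn_symG x y : `|w x y| = `|w y x|.
Proof. by rewrite w_sym. Qed.

Lemma tw_sym (p q : PTT) : tw p q = tw q p.
Proof.
rewrite /pt_w; case: (boolP (pt_ext p q)) => h; first by rewrite ext_asym.
by case: (pt_ext q p).
Qed.

Lemma wn_symT (p q : PTT) : `|tw p q| = `|tw q p|.
Proof. by rewrite tw_sym. Qed.

Local Notation bigT := (etaS_big tw1 (@pt_adj_sym _ adj u) (@pt_adj_irr _ adj u) wn_symT).

Definition W (p : PTT) : {set T} := ~: [set z in belast u (ssval p)].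
Definition closedin (A X : {set T}) :=
  forall z y, z \in A -> y \in X -> y \notin A -> ~~ adj z y.

Lemma mem_Wend (p : PTT) y : (y \in W p :\ pt_end p) = (y \notin u :: ssval p).
Proof.
by rewrite /pt_end (lastI u (ssval p)) mem_rcons !inE negb_or.
Qed.

Lemma W_Ch (p q : PTT) : q \in Ch p -> W q = W p :\ pt_end p.
Proof.
move=> qC; apply/setP => y; rewrite mem_Wend; have [e _ _] := Ch_end qC.
by rewrite !inE e belast_rcons.
Qed.

Lemma nbr (p : PTT) (A : {set T}) : A \subset W p -> closedin A (W p) -> pt_end p \in A ->
  [set y in A | adj (pt_end p) y] = (@pt_end T adj u) @: Ch p.
Proof.
move=> sA cA vA; apply/setP=> y; rewrite inE; apply/andP/imsetP.
  case=> yA vy; have yv : y != pt_end p by apply: contraTneq vy => ->; rewrite adj_irr.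
  have : y \in W p :\ pt_end p by rewrite in_setD1 yv (subsetP sA y yA).
  rewrite mem_Wend => yn; have [q qC e] := Ch_exists yn vy; by exists q.
case=> q qC ->; have [_ h1 h2] := Ch_end qC; split=> //.
apply: contraTT h2 => qA; apply: cA vA _ qA.
by move: h1; rewrite -mem_Wend => /setD1P[].
Qed.

Lemma tw_Ch (p q : PTT) : q \in Ch p -> tw p q = w (pt_end p) (pt_end q).
Proof. by rewrite inE /pt_w => ->. Qed.

Lemma Prod1 (p : PTT) : eT (Subt p :\ p) = \prod_(q in Ch p) eT (Subt q).
Proof.
rewrite Sub_split bigT // => i j iC jC ij; split.
  apply/pred0P=> r /=; apply/negP=> /andP[ri rj].
  by have /andP[/eqP []] := Ch_sep iC jC ij ri rj.
by move=> x y xi yj; have /andP[_] := Ch_sep iC jC ij xi yj.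
Qed.

Lemma Prod2 (p q : PTT) : q \in Ch p ->
  eT (Subt p :\ p :\ q) = eT (Subt q :\ q) * \prod_(i in Ch p :\ q) eT (Subt i).
Proof.
move=> qC; pose B (i : PTT) := if i == q then Subt q :\ q else Subt i.
have BS i : B i \subset Subt i.
  rewrite /B; case: eqP => [->|_]; [exact: subsetDl | exact: subxx].
have -> : Subt p :\ p :\ q = \bigcup_(i in Ch p) B i.
  apply/setP=> r; rewrite in_setD1 Sub_split; apply/andP/bigcupP.
    case=> rq /bigcupP[i iC ri]; exists i => //; rewrite /B.
    by case: eqP => [e|_] //; rewrite in_setD1 rq -e.
  case=> i iC; rewrite /B /=; case: (eqVneq i q) => [_|iq] ri.
    by move: ri; rewrite in_setD1 => /andP[-> rq]; split=> //; apply/bigcupP; exists q.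
  split; last by apply/bigcupP; exists i.
  apply/eqP=> e; subst r.
  by have /andP[/eqP []] := Ch_sep iC qC iq ri (Sub_refl q).
rewrite bigT //; last first.
  move=> i j iC jC ij; split.
    apply/pred0P=> r /=; apply/negP=> /andP[ri rj].
    have ri' := subsetP (BS i) _ ri; have rj' := subsetP (BS j) _ rj.
    by have /andP[/eqP []] := Ch_sep iC jC ij ri' rj'.
  move=> x y xi yj; have xi' := subsetP (BS i) _ xi; have yj' := subsetP (BS j) _ yj.
  by have /andP[_] := Ch_sep iC jC ij xi' yj'.
rewrite (big_setD1 _ qC) /B eqxx; congr (_ * _); apply: eq_bigr => i.
by rewrite in_setD1 => /andP[/negbTE -> _].
Qed.

Lemma recT (p : PTT) : eT (Subt p) = ('X - (w1 (pt_end p))%:P) * eT (Subt p :\ p)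
   - \sum_(q in Ch p) (`|w (pt_end p) (pt_end q)| ^+ 2) *: eT (Subt p :\ p :\ q).
Proof.
rewrite (eta_rec tw1 (@pt_adj_sym _ adj u) (@pt_adj_irr _ adj u) wn_symT (Sub_refl p)).
congr (_ - _); apply: eq_big => [q|q /andP[qS]]; last by rewrite Sub_adj // => h; rewrite tw_Ch // inE.
case: (boolP (q \in Subt p)) => qS /=; last first.
  by apply/esym/negbTE; apply: contra qS; apply: Ch_sub.
by rewrite Sub_adj // inE.
Qed.

Lemma recG (p : PTT) (A : {set T}) : A \subset W p -> closedin A (W p) -> pt_end p \in A ->
  eG A = ('X - (w1 (pt_end p))%:P) * eG (A :\ pt_end p)
   - \sum_(q in Ch p) (`|w (pt_end p) (pt_end q)| ^+ 2) *: eG (A :\ pt_end p :\ pt_end q).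
Proof.
move=> sA cA vA; rewrite (eta_rec w1 adj_sym adj_irr wn_symG vA); congr (_ - _).
rewrite (eq_bigl (mem ((@pt_end T adj u) @: Ch p))); last first.
  by move=> y /=; rewrite -(nbr sA cA vA) !inE.
rewrite big_imset //=; exact: Ch_end_inj.
Qed.


Local Notation mulUG := (etaS_mulU w1 adj_sym adj_irr wn_symG).

Lemma ident n (p : PTT) (A : {set T}) : (#|A| < n)%N -> A \subset W p -> pt_end p \in A ->
  closedin A (W p) ->
  eG A * eT (Subt p :\ p) = eT (Subt p) * eG (A :\ pt_end p).
Proof.
elim: n p A => [|n IH] p A //; rewrite ltnS => hA sA vA cA.
rewrite (recG sA cA vA) recT Prod1 !mulrBl; congr (_ - _); first by ring.
rewrite !mulr_suml; apply: eq_bigr => q qC.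
rewrite (Prod2 qC) (big_setD1 _ qC) /=.
have : pt_end q \in [set y in A | adj (pt_end p) y] by rewrite (nbr sA cA vA) imset_f.
rewrite inE => /andP[yA vy].
have yv : pt_end q != pt_end p by apply: contraTneq vy => ->; rewrite adj_irr.
have h := IH q (A :\ pt_end p) (leq_trans (proper_card (properD1 vA)) hA).
rewrite (W_Ch qC) (setSD _ sA) in_setD1 yv yA in h.
have {}h := h isT isT.
have {}h : eG (A :\ pt_end p) * eT (Subt q :\ q) = eT (Subt q) * eG (A :\ pt_end p :\ pt_end q).
  apply: h => z y; rewrite !in_setD1 => /andP[_ zA] /andP[yv' yW] /nandP[/negPn/eqP ey|yA'].
    by rewrite ey in yv'; rewrite eqxx in yv'.
  exact: cA zA yW yA'.
rewrite -!scalerAl; congr (_ *: _).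
by rewrite [RHS]mulrAC [eT (Subt q :\ q) * _]mulrC h; ring.
Qed.

Lemma divF n (p : PTT) (A : {set T}) : (#|A| < n)%N -> A \subset W p -> pt_end p \in A ->
  closedin A (W p) -> (forall z, z \in A -> connect (eA adj A) (pt_end p) z) ->
  eG A %| eT (Subt p).
Proof.
elim: n p A => [|n IH] p A //; rewrite ltnS => hA sA vA cA conA.
have M : forall m (Q : {set PTT}) (B : {set T}), (#|Q| < m)%N -> Q \subset Ch p ->
    B \subset A :\ pt_end p -> closedin B (W p :\ pt_end p) ->
    (forall z, z \in B -> exists2 q, q \in Q & connect (eA adj B) (pt_end q) z) ->
    eG B %| \prod_(q in Q) eT (Subt q).
  elim=> [|m IHm] Q B //; rewrite ltnS => hQ sQ sB cB conB.
  case: (set_0Vmem Q) => [Q0|[q0 q0Q]].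
    have -> : B = set0.
      apply/setP => z; rewrite inE; apply/negP => zB; have [q] := conB z zB.
      by rewrite Q0 inE.
    by rewrite etaS0 dvd1p.
  have q0C : q0 \in Ch p := subsetP sQ _ q0Q.
  have cQ : (#|Q :\ q0| < m)%N := leq_trans (proper_card (properD1 q0Q)) hQ.
  have sQ' : Q :\ q0 \subset Ch p := subset_trans (subsetDl _ _) sQ.
  rewrite (big_setD1 _ q0Q) /=.
  case: (boolP (pt_end q0 \in B)) => y0B; last first.
    apply: dvdp_mull; apply: IHm => // z zB; have [q qQ c] := conB z zB.
    exists q => //; rewrite in_setD1 qQ andbT; apply: contraNneq y0B => e.
    by rewrite e in c; case: (L1 c) => [->|].
  pose K := compo adj B (pt_end q0).
  have KB : K \subset B := comp_sub adj B (pt_end q0).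
  have EB : K :|: (B :\: K) = B.
    apply/setP=> z; rewrite in_setU in_setD; case: (boolP (z \in K)) => zK //=.
    by rewrite (subsetP KB).
  rewrite -{1}EB mulUG; last first.
  - move=> x y xK; rewrite in_setD => /andP[yK yB]; apply/negP => xy.
    by case/negP: yK; apply: comp_closed xK xy yB.
  - by apply/pred0P=> z /=; rewrite in_setD; case: (z \in K).
  have sKW : K \subset W p :\ pt_end p.
    by apply: subset_trans KB (subset_trans sB (setSD _ sA)).
  apply: dvdp_mul.
  - apply: (IH q0 K).
    + apply: leq_ltn_trans (subset_leq_card (subset_trans KB sB)) _.
      by apply: leq_trans (proper_card (properD1 vA)) hA.
    + by rewrite (W_Ch q0C).
    + by rewrite inE y0B connect0.
    + rewrite (W_Ch q0C) => z y zK yW yK; case: (boolP (y \in B)) => yB.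
        by apply/negP => zy; case/negP: yK; apply: comp_closed zK zy yB.
      exact: cB (subsetP KB _ zK) yW yB.
    + move=> z zK; exact: L2.
  - apply: IHm => //.
    + exact: subset_trans (subsetDl _ _) sB.
    + move=> z y; rewrite in_setD => /andP[zK zB] yW; rewrite in_setD negb_and negbK.
      case/orP => [yK|yB]; last exact: cB zB yW yB.
      apply/negP => zy; case/negP: zK; apply: comp_closed yK _ zB.
      by rewrite adj_sym.
    + move=> z; rewrite in_setD => /andP[zK zB]; have [q qQ c] := conB z zB.
      exists q; last exact: (L3 adj_sym).
      rewrite in_setD1 qQ andbT; apply: contraNneq zK => e.
      by rewrite e in c; rewrite inE zB c.
have h := ident (ltnSn _) sA vA cA.
have hd : eG (A :\ pt_end p) %| \prod_(q in Ch p) eT (Subt q).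
  apply: (M #|Ch p|.+1) => //.
  - move=> z y; rewrite in_setD1 => /andP[_ zA] /setD1P[yv yW] yA'.
    apply: cA zA yW _; apply: contra yA'; by rewrite in_setD1 yv.
  - move=> z; rewrite in_setD1 => /andP[zv zA].
    have [y [vy yA' c]] := L4 (conA z zA) zv.
    have : y \in [set y in A | adj (pt_end p) y].
      by rewrite inE vy andbT; move: yA'; rewrite in_setD1 => /andP[].
    rewrite (nbr sA cA vA) => /imsetP[q qC e]; exists q => //; by rewrite -e.
case/dvdpP: hd => r hr; rewrite Prod1 hr mulrA in h.
have {}h := mulIf (etaS_neq0 w1 adj_sym adj_irr wn_symG (A :\ pt_end p)) h.
by rewrite -h dvdp_mulIl.
Qed.

End Main.

Unset Implicit Arguments. Set Strict Implicit.

Theorem corollary3p3 (C : numClosedFieldType) (T : finType) (adj : rel T)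
    (w : T -> T -> C) (w1 : T -> C) (u : T)
    (adj_sym : symmetric adj) (adj_irr : irreflexive adj)
    (conn : forall x y : T, connect adj x y)
    (w_sym : forall x y : T, w x y = w y x)
    (w_nz : forall x y : T, adj x y -> w x y != 0)
    (w1_real : forall v : T, w1 v \is Num.real) :
  eta_poly adj w w1 %| eta_poly (@pt_adj T adj u) (@pt_w C T adj w u) (@pt_w1 C T adj w1 u).
Proof.
rewrite -(etaS_T adj w w1) -(etaS_T (@pt_adj T adj u) (@pt_w C T adj w u) (@pt_w1 C T adj w1 u)).
rewrite -(Sub_root adj u).
apply: (@divF C T adj w w1 u adj_sym adj_irr w_sym #|T|.+1 (ptroot adj u) setT).
- by rewrite cardsT.
- by apply/subsetP=> z _; rewrite !inE.
- by rewrite inE.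
- by move=> z y _ _; rewrite inE.
- move=> z _; rewrite (@eq_connect _ _ adj) // => x y.
  by rewrite /eA !inE !andbT.
Qed.
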